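(* Let $\mathbb{F}_3$ be the free group on generators $a,b,c$, let $r = aba^{-1}b^{-1}c$, and let $N \subset \mathbb{F}_3$ be the normal closure of $r$. For $w \in N$ define its combinatorial area $A(w)$ as the minimal $d\ge 0$ such that $$w = \prod_{i=1}^d g_i r^{\pm 1} g_i^{-1}, \quad g_i \in \mathbb{F}_3,$$ and define its $(a,b)$-length $l(w)$ as the number of occurrences of the letters $a^{\pm 1}, b^{\pm 1}$ in the cyclic reduction of $w$ (occurrences of $c^{\pm1}$ are not counted). Then $A(w) \leq \frac{1}{2} l(w)$ for every $w \in N$. *)

(* Defs.v *)
From mathcomp Require Import all_boot.
Set Implicit Arguments. Unset Strict Implicit. Unset Printing Implicit Defensive.

(* A letter is a generator index (0 = a, 1 = b, 2 = c) and an exponent flag: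
   (i, false) = x_i, (i, true) = x_i^{-1}. *)
Definition letter := ('I_3 * bool)%type.
Definition word := seq letter.

Definition gen_a : 'I_3 := @Ordinal 3 0 isT.
Definition gen_b : 'I_3 := @Ordinal 3 1 isT.
Definition gen_c : 'I_3 := @Ordinal 3 2 isT.

Definition linv (x : letter) : letter := (x.1, ~~ x.2).

Definition winv (w : word) : word := rev (map linv w).

(* free reduction (stack algorithm); two words represent the same element of F_3
   iff they have the same free reduction *)
Definition push (x : letter) (s : word) : word :=
  match s with
  | y :: s' => if y == linv x then s' else x :: s
  | [::] => [:: x]
  end.
Definition reduce (w : word) : word := foldr push [::] w.

Definition feq (u v : word) : Prop := reduce u = reduce v.

Definition rel_r : word :=
  [:: (gen_a, false); (gen_b, false); (gen_a, true); (gen_b, true); (gen_c, false)].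

Definition conj_r (ge : word * bool) : word :=
  ge.1 ++ (if ge.2 then winv rel_r else rel_r) ++ winv ge.1.

Definition prod_conj (gs : seq (word * bool)) : word := flatten (map conj_r gs).

Definition in_N (w : word) : Prop := exists gs, feq w (prod_conj gs).

(* w can be written as a product of d conjugates of r^{±1}; the combinatorial
   area A(w) is the least such d, so  A(w) <= d  iff  some such product has
   length <= d. *)
Definition area_le (w : word) (d : nat) : Prop :=
  exists gs, feq w (prod_conj gs) /\ size gs <= d.

(* cyclic reduction of a (freely reduced) word: strip first and last letters
   while they are mutually inverse. The fuel n = size s suffices. *)
Fixpoint cred (n : nat) (s : word) : word :=
  match n with
  | 0 => s
  | n'.+1 =>
    match s with
    | x :: t => if (0 < size t) && (last x t == linv x)
                then cred n' (take (size t).-1 t) else s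
    | [::] => s
    end
  end.

Definition cyclic_reduction (w : word) : word :=
  cred (size (reduce w)) (reduce w).

Definition ab_length (w : word) : nat :=
  count (fun x : letter => x.1 != gen_c) (cyclic_reduction w).

(* Main.v *)
Require Import Defs.
From mathcomp Require Import all_boot.
From mathcomp Require Import all_order all_algebra.
From mathcomp Require Import zify.
Set Implicit Arguments. Unset Strict Implicit. Unset Printing Implicit Defensive.


Lemma linvK : involutive linv.
Proof. by case=> i b; rewrite /linv /= negbK. Qed.

Lemma linv_eq x y : (linv x == y) = (x == linv y).
Proof.
apply/eqP/eqP=> [<-|->]; by rewrite linvK.
Qed.

Fixpoint reduced (s : word) : bool :=
  match s with
  | x :: t => (match t with y :: _ => y != linv x | [::] => true end) && reduced t
  | [::] => true
  end.

Lemma push_reduced x s : reduced s -> reduced (push x s).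
Proof.
case: s => [|y s] //= /andP[h1 h2].
case: ifP => [_|hne] //=.
by rewrite /= hne h1 h2.
Qed.

Lemma reduce_reduced w : reduced (reduce w).
Proof. by elim: w => [|x w IH] //=; apply: push_reduced. Qed.

Lemma push_cancel x s : reduced s -> push (linv x) (push x s) = s.
Proof.
case: s => [|y s] /=; first by rewrite linvK eqxx.
case: ifP => [/eqP ->|hne].
  case: s => [|z s] // /andP[hz _].
  rewrite linvK in hz; rewrite /= linvK (negbTE hz) //.
by rewrite /push linvK eqxx.
Qed.

Lemma push_cancel' x s : reduced s -> push x (push (linv x) s) = s.
Proof. by move=> h; rewrite -{1}(linvK x) push_cancel. Qed.

Lemma foldr_push_push q x s : reduced q ->
  foldr push q (push x s) = push x (foldr push q s).
Proof.
move=> hq; case: s => [|y s] //=.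
case: ifP => [/eqP ->|_] //=.
rewrite push_cancel' //.
by elim: s => [|z s IH] //=; apply: push_reduced.
Qed.

Lemma foldr_reduced q s : reduced q -> reduced (foldr push q s).
Proof. by move=> hq; elim: s => [|x s IH] //=; apply: push_reduced. Qed.

Lemma foldr_reduce q v : reduced q -> foldr push q (reduce v) = foldr push q v.
Proof.
move=> hq; elim: v => [|x v IH] //=.
by rewrite foldr_push_push // IH.
Qed.

Lemma reduce_cat u v : reduce (u ++ v) = foldr push (reduce v) u.
Proof. by rewrite /reduce foldr_cat. Qed.

Lemma reduce_catl u v : reduce (reduce u ++ v) = reduce (u ++ v).
Proof. by rewrite !reduce_cat foldr_reduce // reduce_reduced. Qed.

Lemma reduce_catr u v : reduce (u ++ reduce v) = reduce (u ++ v).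
Proof.
rewrite !reduce_cat; congr foldr.
by rewrite /reduce foldr_reduce.
Qed.

Lemma reduce_id s : reduced s -> reduce s = s.
Proof.
elim: s => [|x s IH] //= /andP[h1 h2]; rewrite IH //.
case: s h1 {IH h2} => [|y s] //= h1.
by rewrite /= (negbTE h1).
Qed.

Lemma reduce_idem w : reduce (reduce w) = reduce w.
Proof. by rewrite reduce_id // reduce_reduced. Qed.

Lemma winv_cat u v : winv (u ++ v) = winv v ++ winv u.
Proof. by rewrite /winv map_cat rev_cat. Qed.

Lemma winv_cons x u : winv (x :: u) = winv u ++ [:: linv x].
Proof. by rewrite /winv /= rev_cons cats1. Qed.

Lemma winvK : involutive winv.
Proof. by move=> u; rewrite /winv map_rev revK -map_comp (eq_map linvK) map_id. Qed.

Lemma reduce_winv h : reduce (h ++ winv h) = [::].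
Proof.
elim: h => [|x h IH]; first by [].
have -> : (x :: h) ++ winv (x :: h) = [:: x] ++ (h ++ winv h) ++ [:: linv x].
  by rewrite winv_cons /= catA.
rewrite -reduce_catr -(reduce_catl (h ++ winv h)) IH /=.
by rewrite eqxx.
Qed.

Lemma reduce_winv' h : reduce (winv h ++ h) = [::].
Proof. by rewrite -{2}(winvK h) reduce_winv. Qed.

Lemma feq_cat u u' v v' : feq u u' -> feq v v' -> feq (u ++ v) (u' ++ v').
Proof.
rewrite /feq => h1 h2.
by rewrite -reduce_catl -reduce_catr h1 h2 reduce_catr reduce_catl.
Qed.

Lemma feq_refl u : feq u u. Proof. by []. Qed.
Lemma feq_sym u v : feq u v -> feq v u. Proof. by rewrite /feq. Qed.
Lemma feq_trans u v t : feq u v -> feq v t -> feq u t.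
Proof. by rewrite /feq => -> . Qed.

Lemma feq_cancel g t : feq (g ++ winv g ++ t) t.
Proof. by rewrite /feq catA -reduce_catl reduce_winv. Qed.

Lemma feq_cancel' g t : feq (winv g ++ g ++ t) t.
Proof. by rewrite /feq catA -reduce_catl reduce_winv'. Qed.

Lemma fix_trivial g s : reduced g -> foldr push g s = g -> reduce s = [::].
Proof.
move=> hg h.
have h1 : reduce (reduce s ++ g) = g.
  by rewrite reduce_cat (reduce_id hg) foldr_reduce.
have e1 : reduce (reduce s ++ (g ++ winv g)) = reduce s.
  by rewrite -reduce_catr reduce_winv cats0 reduce_idem.
have e2 : reduce (reduce s ++ (g ++ winv g)) = [::].
  by rewrite catA -reduce_catl h1 reduce_winv.
by rewrite -e1 e2.
Qed.

Lemma conj_trivial g s : reduce (g ++ s ++ winv g) = [::] -> reduce s = [::].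
Proof.
move=> h.
have e1 : reduce (winv g ++ (g ++ s ++ winv g) ++ g) = reduce s.
  rewrite -!catA.
  have := feq_cancel' g (s ++ winv g ++ g); rewrite /feq => ->.
  by rewrite -reduce_catr reduce_winv' cats0.
by rewrite -e1 -reduce_catr -(reduce_catl (g ++ s ++ winv g)) h /= reduce_catr reduce_winv'.
Qed.


Definition la : letter := (gen_a, false).
Definition LA : letter := (gen_a, true).
Definition lb : letter := (gen_b, false).
Definition LB : letter := (gen_b, true).

Definition phiL (x : letter) : word :=
  if x.1 == gen_c then (if x.2 then [:: la; lb; LA; LB] else [:: lb; la; LB; LA])
  else [:: x].
Definition phi (w : word) : word := flatten (map phiL w).

Definition Lab (w : word) : nat := count (fun x : letter => x.1 != gen_c) w.
Definition nc (w : word) : nat := count (fun x : letter => x.1 == gen_c) w.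

Lemma phi_cat u v : phi (u ++ v) = phi u ++ phi v.
Proof. by rewrite /phi map_cat flatten_cat. Qed.

Lemma phi_cons x v : phi (x :: v) = phiL x ++ phi v.
Proof. by []. Qed.

Lemma phiL_linv x : phiL (linv x) = winv (phiL x).
Proof.
case: x => i e; rewrite /phiL /linv /=.
by case: (i == gen_c); case: e.
Qed.

Lemma phi_winv g : phi (winv g) = winv (phi g).
Proof.
elim: g => [|x g IH] //.
by rewrite winv_cons phi_cat IH phi_cons winv_cat /= cats0 phiL_linv.
Qed.

Lemma reduce_phi_reduce u : reduce (phi (reduce u)) = reduce (phi u).
Proof.
elim: u => [|x u IH] //=.
rewrite phi_cons -reduce_catr -IH reduce_catr.
case E: (reduce u) => [|y s] //=.
case: ifP => [/eqP ->|_] //.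
rewrite phi_cons phiL_linv catA -reduce_catl reduce_winv //.
Qed.

Lemma feq_phi u v : feq u v -> reduce (phi u) = reduce (phi v).
Proof. by rewrite /feq => h; rewrite -reduce_phi_reduce h reduce_phi_reduce. Qed.

Lemma phi_prod_conj gs : reduce (phi (prod_conj gs)) = [::].
Proof.
elim: gs => [|[g e] gs IH] //.
rewrite /prod_conj /= -/(prod_conj gs) phi_cat -reduce_catr IH cats0.
rewrite /conj_r /= !phi_cat phi_winv.
rewrite -reduce_catr -(reduce_catl (phi (if e then winv rel_r else rel_r))).
have -> : reduce (phi (if e then winv rel_r else rel_r)) = [::] by case: e.
by rewrite /= reduce_catr reduce_winv.
Qed.

Definition pre (u : word) (p : word * bool) : word * bool := (u ++ p.1, p.2).

Lemma prod_conj_cat g1 g2 : prod_conj (g1 ++ g2) = prod_conj g1 ++ prod_conj g2.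
Proof. by rewrite /prod_conj map_cat flatten_cat. Qed.

Lemma prod_conj_pre u gs :
  feq (prod_conj (map (pre u) gs)) (u ++ prod_conj gs ++ winv u).
Proof.
elim: gs => [|[g e] gs IH]; first by rewrite /feq /= reduce_winv.
rewrite /prod_conj /= -!/(prod_conj _).
have -> : conj_r (pre u (g, e)) = u ++ conj_r (g, e) ++ winv u.
  by rewrite /conj_r /pre /= winv_cat !catA.
apply: (@feq_trans _ ((u ++ conj_r (g, e) ++ winv u) ++ (u ++ prod_conj gs ++ winv u))).
  by apply: feq_cat.
rewrite -!catA; apply: feq_cat => //; apply: feq_cat => //.
apply: feq_cat => //; apply: feq_cat => //; exact: feq_cancel'.
Qed.

Lemma prod_conj_cons p gs : prod_conj (p :: gs) = conj_r p ++ prod_conj gs.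
Proof. by []. Qed.

Lemma decomp w : exists gs, size gs = nc w /\ feq w (prod_conj gs ++ phi w).
Proof.
elim: w => [|x w [gs [hs hf]]]; first by exists [::].
case hx: (x.1 == gen_c).
  case: x hx {hf} (hf) => i e /= /eqP hi hf; subst i.
  pose g : word := if e then [::] else [:: lb; la; LB; LA].
  exists ((g, e) :: map (pre (phiL (gen_c, e))) gs); split.
    by rewrite /= size_map hs /nc /=.
  rewrite prod_conj_cons phi_cons.
  have hx1 : feq [:: (gen_c, e)] (conj_r (g, e) ++ phiL (gen_c, e)).
    by rewrite /g /phiL; clear g hf hs; case: e; vm_compute.
  have h2 := feq_cat hx1 hf.
  rewrite -cat1s; apply: (feq_trans h2).
  have h3 := feq_cat (feq_refl (conj_r (g, e))) (feq_cat (prod_conj_pre (phiL (gen_c, e)) gs) (feq_refl (phiL (gen_c, e) ++ phi w))).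
  have h4 := feq_cat (feq_refl (conj_r (g, e) ++ phiL (gen_c, e) ++ prod_conj gs)) (feq_cancel' (phiL (gen_c, e)) (phi w)).
  rewrite -!catA in h3 h4 *.
  apply: feq_sym; apply: (feq_trans h3); exact: h4.
exists (map (pre [:: x]) gs); split.
  by rewrite size_map hs /nc /= hx.
rewrite phi_cons /phiL hx -cat1s.
apply: feq_trans (feq_cat (feq_refl [:: x]) hf) _.
apply: feq_sym.
apply: feq_trans (feq_cat (prod_conj_pre _ _) (feq_refl _)) _.
rewrite -!catA; apply: feq_cat => //; apply: feq_cat => //.
exact: feq_cancel'.
Qed.

Fixpoint cred_u (n : nat) (s : word) : word :=
  match n with
  | 0 => [::]
  | n'.+1 =>
    match s with
    | x :: t => if (0 < size t) && (last x t == linv x)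
                then x :: cred_u n' (take (size t).-1 t) else [::]
    | [::] => [::]
    end
  end.

Lemma cred_spec n s : s = cred_u n s ++ cred n s ++ winv (cred_u n s).
Proof.
elim: n s => [|n IH] [|x t] //=; rewrite ?cats0 //.
case: ifP => [/andP[ht hl]|_]; last by rewrite cats0.
rewrite winv_cons -/(cred n _).
have et : t = take (size t).-1 t ++ [:: linv x].
  case/lastP: t ht hl {IH} => [|t0 z] // _ /eqP hl.
  rewrite last_rcons in hl; rewrite size_rcons /= -cats1 take_size_cat // hl //.
rewrite {1}et {1}(IH (take (size t).-1 t)) /=.
by rewrite !catA.
Qed.

Import Order.TTheory GRing.Theory Num.Theory.
Local Open Scope ring_scope.

Definition edge := (word * 'I_3)%type.
Definition ind (b : bool) : int := if b then 1 else 0.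

Definition st (q : word) (y : letter) (e : edge) : int :=
  if y.2 then - ind (e == (push y q, y.1)) else ind (e == (q, y.1)).

Fixpoint Nt (q v : word) (e : edge) : int :=
  match v with
  | [::] => 0
  | y :: v' => Nt q v' e + st (foldr push q v') y e
  end.

Lemma Nt_cat q u v e : Nt q (u ++ v) e = Nt (foldr push q v) u e + Nt q v e.
Proof.
elim: u => [|y u IH] /=; first by rewrite add0r.
by rewrite IH foldr_cat addrAC.
Qed.

Lemma st_cancel h y e : reduced h -> st h y e + st (push y h) (linv y) e = 0.
Proof.
move=> hh; rewrite /st /linv /=.
case: y => i [] /=; first by rewrite addNr.
have -> : push (i, true) (push (i, false) h) = h.
  by have := push_cancel (i, false) hh; rewrite /linv.
by rewrite subrr.
Qed.

Lemma Nt_reduce q v e : reduced q -> Nt q (reduce v) e = Nt q v e.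
Proof.
move=> hq; elim: v => [|x v IH] //=.
rewrite -IH -(foldr_reduce _ hq).
case E: (reduce v) => [|y s] //=.
case: ifP => [/eqP hy|_] //=.
rewrite -addrA; subst y.
rewrite -{3}(linvK x) st_cancel ?addr0 //.
exact: foldr_reduced.
Qed.

Definition cellk (q : word) (eps : bool) : word :=
  if eps then push LA (push LB q) else push LB (push LA q).
Definition cellc (k : word) (e : edge) : int :=
  ind (e == (k, gen_a)) + ind (e == (push la k, gen_b))
  - ind (e == (push lb k, gen_a)) - ind (e == (k, gen_b)).
Definition sgn (b : bool) : int := if b then -1 else 1.
Definition S (l : seq (word * bool)) (e : edge) : int :=
  \sum_(p <- l) sgn p.2 * cellc p.1 e.

Fixpoint Tab (w : word) (e : edge) : int :=
  match w with
  | [::] => 0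
  | x :: w' => Tab w' e + (if x.1 == gen_c then 0 else st (reduce (phi w')) x e)
  end.

Fixpoint cells (w : word) : seq (word * bool) :=
  match w with
  | [::] => [::]
  | x :: w' => if x.1 == gen_c then (cellk (reduce (phi w')) x.2, x.2) :: cells w'
               else cells w'
  end.

Lemma contrib q x e : reduced q ->
  Nt q (phiL x) e = if x.1 == gen_c then sgn x.2 * cellc (cellk q x.2) e else st q x e.
Proof.
move=> hq; rewrite /phiL; case: ifP => hx; last by rewrite /= add0r.
case: (x.2); rewrite /= /cellk /cellc /sgn /st /=.
- set m := push LA (push LB q).
  have e1 : push la m = push LB q.
    by rewrite /m; apply: (push_cancel' la); apply: push_reduced.
  rewrite e1; lia.
- set k := push LB (push LA q).
  have e1 : push lb k = push LA q.
    by rewrite /k; apply: (push_cancel' lb); apply: push_reduced.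
  rewrite e1; lia.
Qed.

Lemma T_decomp w e : Nt [::] (phi w) e = Tab w e + S (cells w) e.
Proof.
elim: w => [|x w IH]; first by rewrite /S big_nil.
rewrite phi_cons Nt_cat IH contrib; last exact: reduce_reduced.
rewrite /=; case: ifP => _; last first.
  rewrite -/(reduce _); lia.
rewrite /S big_cons /= -/(reduce _); lia.
Qed.

Lemma sum_ind (E : seq edge) e0 : uniq E ->
  \sum_(e <- E) ind (e == e0) = ind (e0 \in E).
Proof.
elim: E => [|y E IH]; first by rewrite big_nil.
rewrite big_cons in_cons /= => /andP[hy hu]; rewrite IH //.
case: (eqVneq y e0) => [<-|hne] /=.
  by rewrite (negbTE hy) addr0.
by rewrite add0r.
Qed.

Lemma ind_ge0 b : 0 <= ind b. Proof. by case: b. Qed.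
Lemma ind_le1 b : ind b <= 1. Proof. by case: b. Qed.

Lemma norm_st q x e :
  `|st q x e| = ind (e == (if x.2 then push x q else q, x.1)).
Proof.
rewrite /st; case: (x.2); rewrite ?normrN; by case: (_ == _).
Qed.

Lemma Tab_bound w (E : seq edge) : uniq E ->
  \sum_(e <- E) `|Tab w e| <= (Lab w)%:Z.
Proof.
move=> hu; elim: w => [|x w IH].
  by rewrite big1_seq //= => e _; rewrite normr0.
rewrite /=.
apply: (le_trans (y := \sum_(e <- E) (`|Tab w e| + `|if x.1 == gen_c then 0 else st (reduce (phi w)) x e|))).
  by apply: ler_sum => e _; apply: ler_normD.
rewrite big_split /=.
have h2 : \sum_(e <- E) `|if x.1 == gen_c then 0 else st (reduce (phi w)) x e| <= ((x.1 != gen_c) : nat)%:Z.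
  case: (x.1 == gen_c) => /=.
    by rewrite big1_seq // => e _; rewrite normr0.
  under eq_bigr do rewrite norm_st.
  by rewrite sum_ind //; apply: ind_le1.
have := lerD IH h2.
rewrite /Lab /= => h; apply: (le_trans h); by rewrite -PoszD addnC.
Qed.

Lemma size_cells w : size (cells w) = nc w.
Proof.
elim: w => [|x w IH] //=; rewrite /nc /=.
by case: ifP => _ /=; rewrite IH.
Qed.

Lemma cells_reduced w p : p \in cells w -> reduced p.1.
Proof.
elim: w => [|x w IH] //=.
case: ifP => _ //; rewrite in_cons => /orP[/eqP -> /=|]; last exact: IH.
by rewrite /cellk; case: (x.2); do 2 apply: push_reduced; apply: reduce_reduced.
Qed.

Lemma mem_cells k eps w : (k, eps) \in cells w ->
  exists u be, w = u ++ (gen_c, eps) :: be /\ k = cellk (reduce (phi be)) eps.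
Proof.
elim: w => [|x w IH] //=.
case: ifP => hx; last first.
  by move/IH => [u [be [-> ->]]]; exists (x :: u), be.
rewrite in_cons => /orP[/eqP [-> ->]|].
  by exists [::], w; case: x hx => i e /= /eqP ->.
by move/IH => [u [be [-> ->]]]; exists (x :: u), be.
Qed.

Lemma vert_cat u be : reduce (phi (u ++ be)) = foldr push (reduce (phi be)) (phi u).
Proof. by rewrite phi_cat reduce_cat. Qed.

Lemma H1 u be : cellk (reduce (phi (u ++ (gen_c, true) :: be))) false =
  cellk (reduce (phi be)) true -> reduce (phi u) = [::].
Proof.
rewrite /cellk vert_cat => h.
set g := reduce (phi ((gen_c, true) :: be)) in h *.
have hg : reduced g by apply: reduce_reduced.
set hh := foldr push g (phi u) in h.
have rh : reduced hh by apply: foldr_reduced.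
apply: (fix_trivial hg).
rewrite -/hh.
have -> : hh = push la (push lb (push LB (push LA hh))).
  rewrite (push_cancel' lb); last by apply: push_reduced.
  by rewrite (push_cancel' la).
by rewrite h /g phi_cons reduce_cat.
Qed.

Lemma H2 u be : cellk (reduce (phi (u ++ (gen_c, false) :: be))) true =
  cellk (reduce (phi be)) false -> reduce (phi u) = [::].
Proof.
rewrite /cellk vert_cat => h.
set g := reduce (phi ((gen_c, false) :: be)) in h *.
have hg : reduced g by apply: reduce_reduced.
set hh := foldr push g (phi u) in h.
have rh : reduced hh by apply: foldr_reduced.
apply: (fix_trivial hg).
rewrite -/hh.
have -> : hh = push lb (push la (push LA (push LB hh))).
  rewrite (push_cancel' la); last by apply: push_reduced.
  by rewrite (push_cancel' lb).
by rewrite h /g phi_cons reduce_cat.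
Qed.

Lemma conflict_split w k : (k, false) \in cells w -> (k, true) \in cells w ->
  exists al u be eps, w = al ++ (gen_c, eps) :: u ++ (gen_c, ~~ eps) :: be
                      /\ reduce (phi u) = [::].
Proof.
elim: w => [|x w IH] //=.
have ext : (exists al u be eps, w = al ++ (gen_c, eps) :: u ++ (gen_c, ~~ eps) :: be
                      /\ reduce (phi u) = [::]) ->
  exists al u be eps, x :: w = al ++ (gen_c, eps) :: u ++ (gen_c, ~~ eps) :: be
                      /\ reduce (phi u) = [::].
  by move=> [al [u [be [eps [-> h]]]]]; exists (x :: al), u, be, eps.
case: ifP => hx; last by move=> h1 h2; apply: ext; apply: IH.
have ex : x = (gen_c, x.2) by rewrite -(eqP hx); case: (x).
rewrite !in_cons => /orP[/eqP [hk he]|h1] /orP[/eqP [hk' he']|h2].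
- by rewrite -he in he'.
- have [u [be [ew ek]]] := mem_cells h2.
  exists [::], u, be, false; split; first by rewrite ex -he ew.
  by apply: (H1 (be := be)); rewrite -ew he -hk ek.
- have [u [be [ew ek]]] := mem_cells h1.
  exists [::], u, be, true; split; first by rewrite ex -he' ew.
  by apply: (H2 (be := be)); rewrite -ew he' -hk' ek.
- by apply: ext; apply: IH.
Qed.

Definition edges4 (k : word) : seq edge :=
  [:: (k, gen_a); (push la k, gen_b); (push lb k, gen_a); (k, gen_b)].

Lemma cellc_out k e : e \notin edges4 k -> cellc k e = 0.
Proof.
rewrite /edges4 !in_cons in_nil /cellc !orbF => h.
by move: h; do 3 (case: (_ == _) => //=); case: (_ == _).
Qed.

Lemma size_push x s : size (push x s) = match s with
  | y :: s' => if y == linv x then size s' else (size s').+2 | [::] => 1%N end.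
Proof. by case: s => [|y s] //=; case: ifP. Qed.

Lemma push_neq x s : push x s != s.
Proof.
apply/negP => /eqP h; have := congr1 size h; rewrite size_push.
case: s {h} => [|y s] //=; case: ifP => _ hh; move: hh; clear; move: (size s) => m; lia.
Qed.

Lemma sum_restrict (E F : seq edge) (D : edge -> int) : uniq E -> uniq F ->
  {subset F <= E} -> (forall e, e \notin F -> D e = 0) ->
  \sum_(e <- E) D e = \sum_(e <- F) D e.
Proof.
move=> hE hF hs hD.
rewrite (bigID (fun e => e \in F)) /=.
rewrite [X in _ + X]big1 ?addr0; last by move=> e; apply: hD.
rewrite -big_filter; apply: perm_big; apply: uniq_perm.
- exact: filter_uniq.
- exact: hF.
- move=> e; rewrite mem_filter; apply/andP/idP => [[]//|h]; split => //; exact: hs.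
Qed.

Lemma exists_max (l : seq (word * bool)) : (0 < size l)%N ->
  exists2 p, p \in l & forall q, q \in l -> (size q.1 <= size p.1)%N.
Proof.
elim: l => [|p l IH] //= _.
case: l IH => [|p' l] IH.
  by exists p => [|q]; rewrite ?mem_seq1 ?eqxx // => /eqP ->.
have [m hm hmax] := IH isT.
case: (leqP (size p.1) (size m.1)) => h.
  exists m; first by rewrite in_cons hm orbT.
  by move=> q; rewrite in_cons => /orP[/eqP ->|] //; apply: hmax.
exists p; first by rewrite in_cons eqxx.
move=> q; rewrite in_cons => /orP[/eqP ->|/hmax] //.
by move=> hq; apply: (leq_trans hq); apply: ltnW.
Qed.

Lemma S_count (l : seq (word * bool)) v eps e n :
  (forall p, p \in l -> reduced p.1) -> (forall p, p \in l -> p.1 != n) ->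
  (forall p, p \in l -> p.1 = v -> p.2 = eps) ->
  (forall k, reduced k -> cellc k e != 0 -> k = v \/ k = n) ->
  S l e = (count (fun p : word * bool => p.1 == v) l)%:Z * (sgn eps * cellc v e).
Proof.
move=> hr hn hv hsupp.
elim: l hr hn hv => [|p l IH] hr hn hv; first by rewrite /S big_nil mul0r.
rewrite /S big_cons -/(S l e) IH; first last.
- by move=> q hq; apply: hv; rewrite in_cons hq orbT.
- by move=> q hq; apply: hn; rewrite in_cons hq orbT.
- by move=> q hq; apply: hr; rewrite in_cons hq orbT.
have hp : p \in p :: l by rewrite in_cons eqxx.
rewrite /=; case: (eqVneq p.1 v) => [hpv|hpv].
  rewrite (hv p hp hpv) hpv /=; lia.
have -> : cellc p.1 e = 0.
  apply/eqP; apply/negPn/negP => h.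
  case: (hsupp _ (hr p hp) h) => hh; first by rewrite hh eqxx in hpv.
  by have := hn p hp; rewrite hh eqxx.
rewrite /=; lia.
Qed.

Lemma step_edge (l : seq (word * bool)) v eps e n :
  (forall p, p \in l -> reduced p.1) -> (forall p, p \in l -> p.1 != n) ->
  (forall p, p \in l -> p.1 = v -> p.2 = eps) ->
  (forall k, reduced k -> cellc k e != 0 -> k = v \/ k = n) ->
  `|cellc v e| = 1 ->
  `|sgn eps * cellc v e + S l e| = `|S l e| + 1.
Proof.
move=> hr hn hv hsupp hc.
rewrite (S_count hr hn hv hsupp).
set m := (count _ l)%:Z.
have hm : 0 <= m by [].
have hs : `|sgn eps * cellc v e| = 1 by rewrite normrM hc mulr1; rewrite /sgn; case: (eps); rewrite ?normrN normr1.
have : sgn eps * cellc v e = 1 \/ sgn eps * cellc v e = -1 by lia.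
case=> ->; lia.
Qed.

Lemma gab : (gen_a == gen_b) = false. Proof. by []. Qed.
Lemma gba : (gen_b == gen_a) = false. Proof. by []. Qed.

Ltac cellc0 := rewrite /cellc !xpair_eqE ?eqxx ?gab ?gba /= ?andbF ?andbT;
  repeat match goal with H : is_true (?a != ?b) |- _ => rewrite ?(negbTE H); clear H end;
  rewrite /= ?eqxx.

Lemma supp1 v k : reduced k -> cellc k (v, gen_a) != 0 -> k = v \/ k = push LB v.
Proof.
move=> hk; case: (eqVneq v k) => [->|h1]; first by left.
case: (eqVneq v (push lb k)) => [->|h2]; first by right; rewrite (push_cancel lb).
by cellc0.
Qed.

Lemma supp2 v k : reduced k -> reduced v -> cellc k (push la v, gen_b) != 0 -> k = v \/ k = push la v.
Proof.
move=> hk hv; case: (eqVneq (push la v) (push la k)) => [h|h1].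
  by left; rewrite -(push_cancel la hk) -h push_cancel.
case: (eqVneq (push la v) k) => [->|h2]; first by right.
by cellc0.
Qed.

Lemma supp3 v k : reduced k -> reduced v -> cellc k (push lb v, gen_a) != 0 -> k = v \/ k = push lb v.
Proof.
move=> hk hv; case: (eqVneq (push lb v) (push lb k)) => [h|h1].
  by left; rewrite -(push_cancel lb hk) -h push_cancel.
case: (eqVneq (push lb v) k) => [->|h2]; first by right.
by cellc0.
Qed.

Lemma supp4 v k : reduced k -> cellc k (v, gen_b) != 0 -> k = v \/ k = push LA v.
Proof.
move=> hk; case: (eqVneq v k) => [->|h1]; first by left.
case: (eqVneq v (push la k)) => [->|h2]; first by right; rewrite (push_cancel la).
by cellc0.
Qed.

Lemma val1 v : cellc v (v, gen_a) = 1.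
Proof. have h := push_neq lb v; rewrite eq_sym in h; by cellc0. Qed.
Lemma val2 v : cellc v (push la v, gen_b) = 1.
Proof. have h := push_neq la v; by cellc0. Qed.
Lemma val3 v : cellc v (push lb v, gen_a) = -1.
Proof. have h := push_neq lb v; by cellc0. Qed.
Lemma val4 v : cellc v (v, gen_b) = -1.
Proof. have h := push_neq la v; rewrite eq_sym in h; by cellc0. Qed.

Lemma four_good v : (3 <= (size v < size (push LB v))%N + (size v < size (push la v))%N
   + (size v < size (push lb v))%N + (size v < size (push LA v))%N)%N.
Proof.
case: v => [|y v] //=.
case: y => [[[|[|[|i]]] hi] []] //=; move: (size v) => m; lia.
Qed.

Lemma uniq_edges4 v : uniq (edges4 v).
Proof.
have h1 := push_neq lb v; have h2 := push_neq la v.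
rewrite /edges4 /= !in_cons !xpair_eqE !gab !gba !eqxx /= !andbF !andbT /= !orbF.
by rewrite eq_sym h1 h2.
Qed.

Lemma arith (s a1 b1 a2 b2 a3 b3 a4 b4 : int) (n : nat) (g1 g2 g3 g4 : bool) :
  (2 * n)%N%:Z <= s -> b1 - 1 <= a1 -> b2 - 1 <= a2 -> b3 - 1 <= a3 -> b4 - 1 <= a4 ->
  (g1 -> a1 = b1 + 1) -> (g2 -> a2 = b2 + 1) -> (g3 -> a3 = b3 + 1) -> (g4 -> a4 = b4 + 1) ->
  (3 <= g1 + g2 + g3 + g4)%N ->
  (2 * n.+1)%N%:Z <= s + (a1 - b1 + (a2 - b2 + (a3 - b3 + (a4 - b4 + 0)))).
Proof.
case: g1; case: g2; case: g3; case: g4 => //= h0 h1 h2 h3 h4 e1 e2 e3 e4 _;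
repeat match goal with H : is_true true -> _ |- _ => specialize (H isT) end; lia.
Qed.

Lemma iso n : forall (l : seq (word * bool)) (E : seq edge), size l = n -> uniq E ->
  (forall p, p \in l -> reduced p.1) -> (forall p, p \in l -> {subset edges4 p.1 <= E}) ->
  (forall k, (k, false) \in l -> (k, true) \in l -> False) ->
  (2 * n)%N%:Z <= \sum_(e <- E) `|S l e|.
Proof.
elim: n => [|n IH] l E hs hu hr hE hnc.
  by rewrite muln0; apply: sumr_ge0 => e _; apply: normr_ge0.
have [[v eps] hp0 hmax] : exists2 p, p \in l & forall q, q \in l -> (size q.1 <= size p.1)%N.
  by apply: exists_max; rewrite hs.
rewrite /= in hmax.
set l' := rem (v, eps) l.
have hl' : forall q, q \in l' -> q \in l by move=> q; apply: mem_rem.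
have hSl : forall e, S l e = sgn eps * cellc v e + S l' e.
  by move=> e; rewrite /S (perm_big _ (perm_to_rem hp0)) big_cons.
have IH' : (2 * n)%N%:Z <= \sum_(e <- E) `|S l' e|.
  apply: IH => //.
  - by rewrite size_rem // hs.
  - by move=> p hp; apply: hr; apply: hl'.
  - by move=> p hp; apply: hE; apply: hl'.
  - by move=> k h1 h2; apply: (hnc k); apply: hl'.
have hv : reduced v := hr _ hp0.
have hr' : forall p, p \in l' -> reduced p.1 by move=> p hp; apply: hr; apply: hl'.
have hsame : forall p, p \in l' -> p.1 = v -> p.2 = eps.
  move=> [k b] hp /= hk; subst k.
  case: (eqVneq b eps) => // hb; exfalso.
  have h1 := hl' _ hp; clear hp.
  move: h1 hp0 hb; case: b; case: (eps) => // h1 h2 _.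
  - exact: (hnc v h2 h1).
  - exact: (hnc v h1 h2).
have hnot : forall x, (size v < size (push x v))%N -> forall p, p \in l' -> p.1 != push x v.
  move=> x hx p hp; apply/eqP => h.
  by have := hmax p (hl' p hp); rewrite h leqNgt hx.
have D : forall e x, (forall k, reduced k -> cellc k e != 0 -> k = v \/ k = push x v) ->
   `|cellc v e| = 1 ->
   (`|S l' e| - 1 <= `|S l e|) /\ ((size v < size (push x v))%N -> `|S l e| = `|S l' e| + 1).
  move=> e x hsupp hc; split.
    rewrite hSl.
    have hs1 : `|sgn eps * cellc v e| = 1.
      by rewrite normrM hc mulr1 /sgn; case: (eps); rewrite ?normrN normr1.
    move: hs1; move: (sgn eps * cellc v e) (S l' e) => a b; lia.
  move=> hx; rewrite hSl; apply: (step_edge (n := push x v)) => //.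
  exact: hnot.
have hsplit : \sum_(e <- E) `|S l e| =
    \sum_(e <- E) `|S l' e| + \sum_(e <- E) (`|S l e| - `|S l' e|).
  by rewrite -big_split /=; apply: eq_bigr => e _; rewrite addrC subrK.
have hres : \sum_(e <- E) (`|S l e| - `|S l' e|) = \sum_(e <- edges4 v) (`|S l e| - `|S l' e|).
  apply: sum_restrict => //.
  - exact: uniq_edges4.
  - exact: (hE _ hp0).
  - by move=> e he /=; rewrite hSl (cellc_out he) mulr0 add0r subrr.
rewrite hsplit hres.
rewrite /edges4 !big_cons big_nil.
have [d1 g1] := D _ _ (fun k hk => @supp1 v k hk) (eq_trans (congr1 _ (val1 v)) (normr1 _)).
have [d2 g2] := D _ _ (fun k hk => @supp2 v k hk hv) (eq_trans (congr1 _ (val2 v)) (normr1 _)).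
have [d3 g3] := D _ _ (fun k hk => @supp3 v k hk hv) (eq_trans (congr1 _ (val3 v)) (normrN1 _)).
have [d4 g4] := D _ _ (fun k hk => @supp4 v k hk) (eq_trans (congr1 _ (val4 v)) (normrN1 _)).
exact: (arith IH' d1 d2 d3 d4 g1 g2 g3 g4 (four_good v)).
Qed.

Import Order.TTheory GRing.Theory Num.Theory.
Local Open Scope ring_scope.

Lemma KI w : reduce (phi w) = [::] ->
  (forall k, (k, false) \in cells w -> (k, true) \in cells w -> False) ->
  (2 * nc w <= Lab w)%N.
Proof.
move=> hphi hnc.
set E := undup (flatten (map (fun p => edges4 p.1) (cells w))).
have hiso := @iso (size (cells w)) (cells w) E erefl (undup_uniq _)
  (fun p hp => cells_reduced hp).
have hsub : forall p, p \in cells w -> {subset edges4 p.1 <= E}.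
  move=> p hp e he; rewrite mem_undup; apply/flattenP; exists (edges4 p.1) => //.
  by apply/mapP; exists p.
have := hiso hsub hnc.
have hS : forall e, S (cells w) e = - Tab w e.
  move=> e; have := T_decomp w e.
  rewrite -Nt_reduce // hphi /= => /eqP; rewrite eq_sym addrC addr_eq0 => /eqP //.
under eq_bigr do rewrite hS normrN.
move/le_trans => /(_ _ (Tab_bound w (undup_uniq _))).
by rewrite size_cells lez_nat.
Qed.

Lemma reduce_phi_split al u be eps :
  reduce (phi u) = [::] ->
  reduce (phi (al ++ (gen_c, eps) :: u ++ (gen_c, ~~ eps) :: be)) = reduce (phi (al ++ be)).
Proof.
move=> hu.
rewrite !phi_cat !phi_cons phi_cat phi_cons.
rewrite -[LHS]reduce_catr -[RHS]reduce_catr; congr (reduce (_ ++ _)).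
rewrite -reduce_catr -(reduce_catl (phi u)) hu /= reduce_catr.
have -> : phiL (gen_c, ~~ eps) = winv (phiL (gen_c, eps)) by rewrite -phiL_linv.
by rewrite catA -reduce_catl reduce_winv.
Qed.

Lemma Lab_cat u v : Lab (u ++ v) = (Lab u + Lab v)%N.
Proof. by rewrite /Lab count_cat. Qed.

Lemma ML n : forall w, (size w <= n)%N -> reduce (phi w) = [::] ->
  exists gs, feq w (prod_conj gs) /\ (2 * size gs <= Lab w)%N.
Proof.
elim: n => [|n IH] w hw hphi.
  by case: w hw hphi => // _ _; exists [::].
case hb: (has (fun p : word * bool => (p.1, ~~ p.2) \in cells w) (cells w)); last first.
  have [gs [hs hf]] := decomp w.
  exists gs; split.
    by move: hf; rewrite /feq -reduce_catr hphi cats0.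
  rewrite hs; apply: KI => // k h1 h2.
  by move/negP: hb; apply; apply/hasP; exists (k, false).
have [[k b] hp hp'] := hasP hb.
have [al [u [be [eps [ew hu]]]]] : exists al u be eps,
    w = al ++ (gen_c, eps) :: u ++ (gen_c, ~~ eps) :: be /\ reduce (phi u) = [::].
  by move: hp hp'; case: b => /= h1 h2; [apply: (conflict_split h2 h1) | apply: (conflict_split h1 h2)].
have hsz : size w = (size al + size u + size be + 2)%N.
  rewrite ew size_cat /= size_cat /=; move: (size al) (size u) (size be) => x y z; lia.
have [gu [hfu hsu]] : exists gs, feq u (prod_conj gs) /\ (2 * size gs <= Lab u)%N.
  apply: IH => //; move: hw; rewrite hsz; move: (size al) (size u) (size be) => x y z; lia.
have [gab [hfab hsab]] : exists gs, feq (al ++ be) (prod_conj gs) /\ (2 * size gs <= Lab (al ++ be))%N.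
  apply: IH; first by rewrite size_cat; move: hw; rewrite hsz; move: (size al) (size u) (size be) => x y z; lia.
  by rewrite -(reduce_phi_split al be eps hu) -ew.
exists (map (pre (al ++ [:: (gen_c, eps)])) gu ++ gab); split; last first.
  rewrite size_cat size_map ew !Lab_cat /= Lab_cat /Lab /=.
  rewrite Lab_cat in hsab; move: hsu hsab; rewrite /Lab; move: (count _ al) (count _ u) (count _ be) (size gu) (size gab) => *; lia.
rewrite prod_conj_cat.
apply: feq_sym.
apply: (feq_trans (feq_cat (prod_conj_pre _ _) (feq_sym hfab))).
rewrite winv_cat /= -!catA ew.
apply: feq_cat => //; rewrite cat1s; apply: (@feq_cat [:: _] [:: _]) => //.
apply: feq_cat; first exact: feq_sym.
apply: (@feq_cat [:: _] [:: _]) => //.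
exact: feq_cancel'.
Qed.

Local Close Scope ring_scope.

Theorem theorem1p2 (w : word) :
  in_N w -> exists gs : seq (word * bool),
    feq w (prod_conj gs) /\ 2 * size gs <= ab_length w.
Proof.
move=> [gs0 h0].
have hphi : reduce (phi w) = [::] by rewrite (feq_phi h0) phi_prod_conj.
set s := reduce w.
set cr := cred (size s) s.
set u := cred_u (size s) s.
have hs : s = u ++ cr ++ winv u by apply: cred_spec.
have hw : feq w (u ++ cr ++ winv u) by rewrite /feq -hs /s reduce_idem.
have hcr : reduce (phi cr) = [::].
  apply: (@conj_trivial (phi u)); rewrite -phi_winv -!phi_cat.
  by rewrite -(feq_phi hw).
have [gs [hf hsz]] := @ML (size cr) cr (leqnn _) hcr.
exists (map (pre u) gs); split.
  apply: (feq_trans hw); apply: feq_sym.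
  apply: (feq_trans (prod_conj_pre _ _)).
  apply: feq_cat => //; apply: feq_cat => //; exact: feq_sym.
by rewrite size_map.
Qed.
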